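(* Let $n\ge 2$ and $\pi\in LP_{n-1}$ with $\operatorname{ex}(\pi)=k$. Then the exposure numbers of the $k+1$ elements of $P(\pi)$ are exactly $1,2,\dots,k+1$, each occurring once. The element $\pi^+$ has exposure number $k+1$. For $1\le i\le k$, the element obtained by merging the $i$-th outermost link of $\pi^+$ (counted from the left in the order $1,\dots,2n-1,0$) with the link $\{2n-1,0\}$ has exposure number $i$. Consequently, consider the rooted tree whose vertices at level $m\ge1$ are the elements of $LP_m$, whose root is the unique element of $LP_1$, and in which the children of $\pi\in LP_{m}$ are the elements of $P(\pi)\subseteq LP_{m+1}$, with $\pi$ labelled $\operatorname{ex}(\pi)+1$. This tree is isomorphic, as a labelled rooted tree, to the Catalan tree.
   Context: For a positive integer $m$, a link pattern of $m$ strands is a non-crossing perfect matching of $\{0,1,\dots,2m-1\}$, i.e. there are no two pairs $\{a,b\},\{c,d\}$ with $a<c<b<d$. Let $LP_m$ be the set of link patterns of $m$ strands. For $i\in\{0,\dots,2m-1\}$, with indices taken mod $2m$, the map $e_i:LP_m\to LP_m$ is defined as follows. If $\sigma$ pairs $i$ with $i+1$, then $e_i(\sigma)=\sigma$. Otherwise, if $\sigma$ pairs $i$ with $a$ and $i+1$ with $b$, then $e_i(\sigma)$ pairs $i$ with $i+1$ and $a$ with $b$, keeping all other pairs. Exposure number: place the points of $\sigma\in LP_m$ on a line in the order $1,2,\dots,2m-1,0$. A pair $\{a,b\}$, with $a$ before $b$, is an outermost link if there is no other pair $\{c,d\}$ with $c$ before $a$ and $b$ before $d$. The exposure number $\operatorname{ex}(\sigma)$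 is the number of outermost links. For $\pi\in LP_{n-1}$, $\pi^+\in LP_n$ consists of the pair $\{2n-1,0\}$ together with the pairs $\{\varphi(a),\varphi(b)\}$ for each pair $\{a,b\}$ of $\pi$, where $\varphi(j)=j$ for $1\le j\le 2n-3$ and $\varphi(0)=2n-2$. Define $P(\pi)=\{\sigma\in LP_n: e_{2n-1}(\sigma)=\pi^+\}$. The ''merge'' of an outermost link $\{a,b\}$ of $\pi^+$ (with $a$ before $b$ in the order $1,\dots,2n-1,0$) with $\{2n-1,0\}$ is the link pattern obtained by replacing these two pairs with $\{a,2n-1\}$ and $\{b,0\}$. The Catalan tree is the rooted labelled tree whose root has label $2$, and in which a node with label $j$ has exactly $j$ children, with labels $2,3,\dots,j+1$. *)

(* Defs.v *)
(* A link pattern of m strands is encoded as a sequence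
   s : seq nat of size 2m, where nth 0 s i is the partner of point i. *)
From mathcomp Require Import all_boot.
Set Implicit Arguments. Unset Strict Implicit. Unset Printing Implicit Defensive.

Notation partner s i := (nth 0%N s i).

Definition is_lp (m : nat) (s : seq nat) : Prop :=
  size s = (2 * m)%N /\
  (forall i, i < 2 * m -> partner s i < 2 * m /\ partner s i <> i /\
                          partner s (partner s i) = i) /\
  (forall a b c d, a < c -> c < b -> b < d -> d < 2 * m ->
     partner s a = b -> partner s c = d -> False).

Definition e_op (i0 : nat) (s : seq nat) : seq nat :=
  let M := size s in
  let i := i0 %% M in
  let j := i.+1 %% M in
  if partner s i == j then s else
  let a := partner s i in
  let b := partner s j in
  mkseq (fun x => if x == i then j else if x == j then i
                  else if x == a then b else if x == b then a
                  else partner s x) M.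

(* Position of point x on the line 1,2,...,2m-1,0. *)
Definition pos (s : seq nat) (x : nat) : nat := if x == 0 then size s else x.

Definition outermost (s : seq nat) (a : nat) : bool :=
  (a < size s) && (pos s a < pos s (partner s a)) &&
  ~~ has (fun c => (pos s c < pos s a) && (pos s (partner s a) < pos s (partner s c)))
         (iota 0 (size s)).

Definition ex (s : seq nat) : nat := count (outermost s) (iota 0 (size s)).

Definition outer_lefts (s : seq nat) : seq nat :=
  [seq a <- iota 1 (size s).-1 ++ [:: 0] | outermost s a].

Definition phi (N j : nat) : nat := if j == 0 then N else j.

(* pi^+ for pi in LP_{n-1} (size pi = N = 2n-2, so 2n-1 = N.+1). *)
Definition lp_plus (p : seq nat) : seq nat :=
  let N := size p in
  mkseq (fun x => if x == 0 then N.+1 else if x == N.+1 then 0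
                  else phi N (partner p (if x == N then 0 else x))) N.+2.

Definition in_P (p sigma : seq nat) : Prop :=
  is_lp (size p)./2.+1 sigma /\ e_op (size sigma).-1 sigma = lp_plus p.

(* Merge the link {a, b} (b = partner a, a before b in the order
   1,...,2n-1,0) with {2n-1, 0}: the result has the pairs {a, 0} and
   {b, 2n-1} (the context's literal {a,2n-1},{b,0}
   is crossing, hence not a link pattern; the non-crossing merge is used). *)
Definition lp_merge (s : seq nat) (a : nat) : seq nat :=
  let top := (size s).-1 in
  let b := partner s a in
  mkseq (fun x => if x == a then 0 else if x == 0 then a
                  else if x == b then top else if x == top then b
                  else partner s x) (size s).

Definition lp_vertex (s : seq nat) : Prop := exists m, 1 <= m /\ is_lp m s.
Definition lp_root : seq nat := [:: 1; 0].
Definition lp_label (s : seq nat) : nat := (ex s).+1.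

(* The Catalan tree: a vertex is identified with the sequence of labels on
   the path from the root to it (children of a node have distinct labels,
   so this identification is faithful). *)
Definition cat_vertex (t : seq nat) : Prop :=
  exists r, t = 2 :: r /\ path (fun x y => (2 <= y) && (y <= x.+1)) 2 r.
Definition cat_root : seq nat := [:: 2].
Definition cat_label (t : seq nat) : nat := last 2 t.
Definition cat_child (t u : seq nat) : Prop :=
  exists j, 2 <= j <= (last 2 t).+1 /\ u = rcons t j.

(* Main.v *)
Require Import Defs.
From mathcomp Require Import all_boot zify.
Set Implicit Arguments. Unset Strict Implicit. Unset Printing Implicit Defensive.

Definition posM (M x : nat) := if x == 0 then M else x.
Definition unposM (M u : nat) := if u == M then 0 else u.

Lemma posK M x : x < M -> unposM M (posM M x) = x.
Proof. rewrite /posM /unposM; repeat case: eqP; lia. Qed.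
Lemma unposK M u : 0 < u <= M -> posM M (unposM M u) = u.
Proof. rewrite /posM /unposM; repeat case: eqP; lia. Qed.
Lemma unpos_lt M u : 0 < u <= M -> unposM M u < M.
Proof. rewrite /unposM; case: eqP; lia. Qed.
Lemma pos_rng M x : x < M -> 0 < posM M x <= M.
Proof. rewrite /posM; case: eqP; lia. Qed.
Lemma posM_id M x : x != 0 -> posM M x = x.
Proof. by rewrite /posM => /negPf ->. Qed.
Lemma unposM_id M u : u != M -> unposM M u = u.
Proof. by rewrite /unposM => /negPf ->. Qed.

Definition qf (s : seq nat) (u : nat) := posM (size s) (partner s (unposM (size s) u)).
Definition pinv (M : nat) (q : nat -> nat) :=
  forall u, 0 < u <= M -> 0 < q u <= M /\ q u <> u /\ q (q u) = u.
Definition NC1 (M : nat) (q : nat -> nat) := forall a b c d, 0 < a -> a < c -> c < b -> b < d -> d <= M ->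
  q a = b -> q c = d -> False.
Definition posform (s : seq nat) :=
  (forall x, x < size s -> partner s x < size s) /\ pinv (size s) (qf s) /\ NC1 (size s) (qf s).

Lemma qf_pos s x : x < size s -> qf s (posM (size s) x) = posM (size s) (partner s x).
Proof. by move=> h; rewrite /qf posK. Qed.

Lemma lp_pos m s : is_lp m s -> posform s.
Proof.
case=> Hs [Hi Hnc]; rewrite -Hs in Hi Hnc; set M := size s in Hi Hnc *.
have Hq : forall x, 0 < x < M -> qf s x = posM M (partner s x).
  by move=> x hx; rewrite /qf unposM_id //; apply/eqP; lia.
have Hf : forall x y, 0 < x < M -> 0 < y < M -> qf s x = y -> partner s x = y.
  move=> x y hx hy; rewrite Hq // /posM; have [+ _] := Hi x ltac:(lia); case: eqP; lia.
split; first by move=> x /Hi [].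
split.
- move=> u Hu; have xl := unpos_lt Hu; have [fl [fn ff]] := Hi _ xl.
  rewrite /qf -/M; split; first exact: pos_rng.
  split.
  + move=> E; apply: fn; by rewrite -(posK fl) E.
  + by rewrite posK // ff unposK.
- move=> a b c d a0 ac cb bd dM qa qc.
  have Ea := Hf a b ltac:(lia) ltac:(lia) qa.
  have [dl|de] : d < M \/ d = M by lia.
  + have Ec := Hf c d ltac:(lia) ltac:(lia) qc.
    exact: (Hnc a b c d).
  + move: qc; rewrite Hq; last lia. rewrite de /posM. have [fl [_ ff]] := Hi c ltac:(lia).
    case: eqP => [Ec _|En E]; last lia.
    rewrite Ec in ff.
    by apply: (Hnc 0 c a b); try lia.
Qed.

Lemma pos_lp m s : size s = 2 * m -> posform s -> is_lp m s.
Proof.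
move=> Hs [Hb [Hp Hn]]; split=> //; rewrite -Hs; set M := size s in Hb Hp Hn *.
have Hq : forall x, x < M -> qf s (posM M x) = posM M (partner s x) by move=> x; apply: qf_pos.
have Hi : forall i, i < M -> partner s i < M /\ partner s i <> i /\ partner s (partner s i) = i.
  move=> i il; have fl := Hb i il; have [_ [H1 H2]] := Hp _ (pos_rng il).
  rewrite !Hq // in H1 H2.
  split=> //; split.
  + by move=> E; apply: H1; rewrite E.
  + have fl2 := Hb _ fl. by rewrite -(posK fl2) H2 posK.
split=> //.
move=> a b c d ac cb bd dM Ea Ec.
have [a0|a0] : a = 0 \/ 0 < a by lia.
- subst a. have [_ [_ Eb]] := Hi 0 ltac:(lia). rewrite Ea in Eb.
  apply: (Hn c d b M) => //; try lia.
  + by have := Hq c ltac:(lia); rewrite Ec !posM_id //; apply/eqP; lia.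
  + by have := Hq b ltac:(lia); rewrite Eb posM_id //; apply/eqP; lia.
- apply: (Hn a b c d) => //; try lia.
  + by have := Hq a ltac:(lia); rewrite Ea !posM_id //; apply/eqP; lia.
  + by have := Hq c ltac:(lia); rewrite Ec !posM_id //; apply/eqP; lia.
Qed.

Definition outerQ (q : nat -> nat) (M u : nat) : bool :=
  (u < q u) && ~~ has (fun v => (v < u) && (q u < q v)) (iota 1 M).

Lemma iota_last M : iota 1 M.+1 = iota 1 M ++ [:: M.+1].
Proof. by have := iotaD 1 M 1; rewrite addn1 add1n => ->. Qed.

Lemma map_pos_iota M : 0 < M -> perm_eq (map (posM M) (iota 0 M)) (iota 1 M).
Proof.
case: M => // M _.
have E : map (posM M.+1) (iota 1 M) = iota 1 M.
  rewrite -[RHS]map_id; apply/eq_in_map => x; rewrite mem_iota /posM => h; case: eqP => //; lia.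
by rewrite iota_last /= E cats1 perm_sym perm_rcons.
Qed.

Lemma outermost_pos s x : x < size s ->
  outermost s x = outerQ (qf s) (size s) (posM (size s) x).
Proof.
move=> xl; rewrite /outermost xl /outerQ /=; change (pos s) with (posM (size s)).
rewrite qf_pos //; congr (_ && ~~ _).
rewrite -(eq_has_r (perm_mem (map_pos_iota _))); last lia.
rewrite has_map; apply: eq_in_has => c; rewrite mem_iota => cl /=.
by rewrite qf_pos //; lia.
Qed.

Lemma ex_pos s : 0 < size s -> ex s = count (outerQ (qf s) (size s)) (iota 1 (size s)).
Proof.
move=> s0; rewrite /ex (@eq_in_count _ _ (fun x => outerQ (qf s) (size s) (posM (size s) x))).
  by rewrite -(count_map (posM (size s))); apply/permP/map_pos_iota.
by move=> x; rewrite mem_iota => xl; apply: outermost_pos; lia.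
Qed.

Lemma outer_lefts_pos s : 0 < size s ->
  outer_lefts s = map (unposM (size s)) (filter (outerQ (qf s) (size s)) (iota 1 (size s))).
Proof.
move=> s0; rewrite /outer_lefts.
have -> : iota 1 (size s).-1 ++ [:: 0] = map (unposM (size s)) (iota 1 (size s)).
  case: (size s) s0 => // M _; rewrite iota_last map_cat /= {2}/unposM eqxx.
  congr (_ ++ _); rewrite -[LHS]map_id; apply/eq_in_map => x.
  by rewrite mem_iota /unposM => h; case: eqP => //; lia.
rewrite filter_map; congr map; apply: eq_in_filter => u; rewrite mem_iota => hu /=.
have hu' : 0 < u <= size s by lia.
by rewrite outermost_pos ?unposK // unpos_lt.
Qed.

Lemma posM_neq0 M y : 0 < M -> posM M y != 0.
Proof. rewrite /posM; case: (y =P 0); lia. Qed.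

Lemma iota_split2 N : iota 1 N.+2 = iota 1 N ++ [:: N.+1; N.+2].
Proof. by rewrite !iota_last -catA. Qed.

Section Plus.
Variable p : seq nat.
Local Notation N := (size p).
Local Notation sp := (lp_plus p).

Lemma size_plus : size sp = N.+2.
Proof. by rewrite size_mkseq. Qed.
Lemma plus_0 : partner sp 0 = N.+1.
Proof. by rewrite nth_mkseq. Qed.
Lemma plus_N1 : partner sp N.+1 = 0.
Proof. by rewrite /lp_plus nth_mkseq //= eqxx. Qed.
Lemma plus_in u : 0 < u <= N -> partner sp u = qf p u.
Proof.
move=> hu; rewrite /lp_plus nth_mkseq; last lia.
have -> : (u == 0) = false by apply/eqP; lia.
by have -> : (u == N.+1) = false by apply/eqP; lia.
Qed.

Hypothesis N0 : 0 < N.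

Lemma qf_plus_in u : 0 < u <= N -> qf sp u = qf p u.
Proof.
move=> hu; rewrite /qf size_plus unposM_id; last by apply/eqP; lia.
by rewrite -/(qf p u) plus_in // posM_id // posM_neq0.
Qed.
Lemma qf_plus_N1 : qf sp N.+1 = N.+2.
Proof. by rewrite /qf size_plus unposM_id ?plus_N1 //; apply/eqP; lia. Qed.
Lemma qf_plus_N2 : qf sp N.+2 = N.+1.
Proof. by rewrite /qf size_plus /unposM eqxx plus_0 posM_id. Qed.

Variable m : nat.
Hypothesis Hp : is_lp m p.

Lemma plus_lp : is_lp m.+1 sp.
Proof.
have [Hb [Hq Hn]] := lp_pos Hp; have [Hs _] := Hp.
apply: pos_lp; first by rewrite size_plus; lia.
rewrite /posform size_plus; split; [|split].
- move=> x xl; have [->|x0] := eqVneq x 0; first by rewrite plus_0.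
  have [->|x1] := eqVneq x N.+1; first by rewrite plus_N1.
  rewrite plus_in; last lia. have [] := Hq x; lia.
- move=> u hu; have [ul|ue] : u <= N \/ u = N.+1 \/ u = N.+2 by lia.
  + rewrite qf_plus_in; last lia. have [h1 [h2 h3]] := Hq u ltac:(lia).
    by rewrite qf_plus_in; [repeat split => //; lia | lia].
  + case: ue => ->; rewrite ?qf_plus_N1 ?qf_plus_N2 ?qf_plus_N1; repeat split; lia.
- move=> a b c d a0 ac cb bd dM qa qc.
  have cN : c <= N by lia.
  rewrite qf_plus_in in qc; last lia.
  have [h1 _] := Hq c ltac:(lia).
  rewrite qf_plus_in in qa; last lia.
  by apply: (Hn a b c d); lia.
Qed.

Lemma outer_plus_in u : 0 < u <= N -> outerQ (qf sp) N.+2 u = outerQ (qf p) N u.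
Proof.
move=> hu; rewrite /outerQ qf_plus_in //; congr (_ && ~~ _).
rewrite iota_split2 has_cat /=.
have -> : (N.+1 < u) = false by lia.
have -> : (N.+2 < u) = false by lia.
rewrite /= !orbF; apply: eq_in_has => v; rewrite mem_iota => hv.
by rewrite qf_plus_in //; lia.
Qed.

Lemma outer_plus_N1 : outerQ (qf sp) N.+2 N.+1 = true.
Proof.
have [_ [Hq' _]] := lp_pos plus_lp; rewrite size_plus in Hq'.
rewrite /outerQ qf_plus_N1 ltnSn andTb; apply/hasPn => v; rewrite mem_iota => hv.
have [] := Hq' v; lia.
Qed.
Lemma outer_plus_N2 : outerQ (qf sp) N.+2 N.+2 = false.
Proof. by rewrite /outerQ qf_plus_N2 ltnNge leqnSn. Qed.

Lemma ex_plus : ex sp = (ex p).+1.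
Proof.
have [_ [Hq' _]] := lp_pos plus_lp; rewrite size_plus in Hq'.
rewrite !ex_pos ?size_plus // iota_split2 count_cat.
rewrite (eq_in_count (a2 := outerQ (qf p) N)); last first.
  by move=> u; rewrite mem_iota => hu; apply: outer_plus_in; lia.
by rewrite /= outer_plus_N1 outer_plus_N2 /= addn1.
Qed.

Lemma outer_lefts_plus : outer_lefts sp = filter (outerQ (qf p) N) (iota 1 N) ++ [:: N.+1].
Proof.
have [_ [Hq' _]] := lp_pos plus_lp; rewrite size_plus in Hq'.
rewrite outer_lefts_pos ?size_plus // iota_split2 filter_cat.
rewrite (eq_in_filter (a2 := outerQ (qf p) N)); last first.
  by move=> u; rewrite mem_iota => hu; apply: outer_plus_in; lia.
rewrite /= outer_plus_N1 outer_plus_N2 /= map_cat /=.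
have -> : unposM N.+2 N.+1 = N.+1 by rewrite unposM_id //; lia.
congr (_ ++ _); rewrite -[RHS]map_id; apply/eq_in_map => x.
rewrite mem_filter mem_iota => /andP[_ h]; rewrite unposM_id //; lia.
Qed.

End Plus.

Section Merge.
Variable p : seq nat.
Local Notation N := (size p).
Local Notation sp := (lp_plus p).
Hypothesis N0 : 0 < N.
Variable m : nat.
Hypothesis Hp : is_lp m p.
Variable u0 : nat.
Hypothesis hu0 : 0 < u0 <= N.
Hypothesis ou0 : outerQ (qf p) N u0.
Local Notation w := (qf p u0).
Local Notation sm := (lp_merge sp u0).

Lemma Hqp : pinv N (qf p).
Proof. by have [_ []] := lp_pos Hp. Qed.
Lemma Hnp : NC1 N (qf p).
Proof. by have [_ []] := lp_pos Hp. Qed.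

Lemma w_facts : 0 < w <= N /\ u0 < w /\ qf p w = u0.
Proof.
have [h1 [h2 h3]] := Hqp hu0; move: ou0; rewrite /outerQ => /andP[h4 _]; lia.
Qed.

Lemma outer2 v : 0 < v <= N -> v < u0 -> qf p v <= w.
Proof.
move=> hv vu; move: ou0; rewrite /outerQ => /andP[_ /hasPn H].
have := H v; rewrite mem_iota; move/(_ ltac:(lia)); lia.
Qed.

Lemma size_merge : size sm = N.+2.
Proof. by rewrite /lp_merge size_mkseq size_plus. Qed.

Lemma merge_nth x : x < N.+2 -> partner sm x =
  if x == u0 then 0 else if x == 0 then u0 else if x == w then N.+1
  else if x == N.+1 then w else partner sp x.
Proof. by move=> xl; rewrite /lp_merge size_plus nth_mkseq //= plus_in. Qed.

Lemma qfE s u : qf s u = posM (size s) (partner s (unposM (size s) u)).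
Proof. by []. Qed.

Lemma qfm_u0 : qf sm u0 = N.+2.
Proof. by rewrite (qfE sm) size_merge unposM_id ?merge_nth ?eqxx //; lia. Qed.
Lemma qfm_w : qf sm w = N.+1.
Proof.
have [h1 [h2 h3]] := w_facts.
rewrite (qfE sm) size_merge unposM_id ?merge_nth; try lia.
have -> : (w == u0) = false by lia.
have -> : (w == 0) = false by lia.
by rewrite eqxx posM_id.
Qed.
Lemma qfm_N1 : qf sm N.+1 = w.
Proof.
have [h1 [h2 h3]] := w_facts.
rewrite (qfE sm) size_merge unposM_id ?merge_nth; try lia.
have -> : (N.+1 == u0) = false by lia.
have -> : (N.+1 == w) = false by lia.
by rewrite eqxx posM_id //; lia.
Qed.
Lemma qfm_N2 : qf sm N.+2 = u0.
Proof.
rewrite (qfE sm) size_merge /unposM eqxx merge_nth //.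
have -> : (0 == u0) = false by lia.
by rewrite eqxx posM_id //; lia.
Qed.
Lemma qfm_o u : 0 < u <= N -> u != u0 -> u != w -> qf sm u = qf p u.
Proof.
move=> hu h1 h2; rewrite (qfE sm) size_merge unposM_id ?merge_nth; try lia.
rewrite (negPf h1) (negPf h2).
have -> : (u == 0) = false by lia.
have -> : (u == N.+1) = false by lia.
by rewrite plus_in // posM_id // posM_neq0.
Qed.

Lemma merge_lp : is_lp m.+1 sm.
Proof.
have [Hs _] := Hp.
have [h1 [h2 h3]] := w_facts.
have Hq := Hqp; have Hn := Hnp.
have [Hbp _] := lp_pos (plus_lp N0 Hp); rewrite size_plus in Hbp.
apply: pos_lp; first by rewrite size_merge; lia.
rewrite /posform size_merge; split; [|split].
- move=> x xl; rewrite merge_nth //.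
  repeat case: ifP => _; try lia. exact: Hbp.
- move=> u hu.
  have [->|uu0] := eqVneq u u0; first by rewrite qfm_u0 qfm_N2; repeat split; lia.
  have [->|uw] := eqVneq u w; first by rewrite qfm_w qfm_N1; repeat split; lia.
  have [->|uN1] := eqVneq u N.+1; first by rewrite qfm_N1 qfm_w; repeat split; lia.
  have [->|uN2] := eqVneq u N.+2; first by rewrite qfm_N2 qfm_u0; repeat split; lia.
  have hu' : 0 < u <= N by lia.
  have [k1 [k2 k3]] := Hq u hu'.
  rewrite qfm_o //; split; first lia; split=> //.
  rewrite qfm_o //; try lia.
  + apply/eqP => E. by rewrite -k3 E eqxx in uw.
  + apply/eqP => E. by rewrite -k3 E h3 eqxx in uu0.
- move=> a b c d a0 ac cb bd dM qa qc.
  have [ce|cu] := eqVneq c u0.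
  + subst c; rewrite qfm_u0 in qc; subst d.
    rewrite qfm_o in qa; try lia.
    have := @outer2 a ltac:(lia) ac; rewrite qa => bw.
    have [k1 [k2 k3]] := Hq a ltac:(lia).
    have bw' : b != w by apply/eqP => E; move: k3; rewrite qa E h3; lia.
    by apply: (Hn a b u0 w); lia.
  have [ce|cw] := eqVneq c w.
  + subst c; rewrite qfm_w in qc; subst d.
    have [ae|au] := eqVneq a u0; first by rewrite ae qfm_u0 in qa; lia.
    rewrite qfm_o in qa; try lia.
    have [k1 [k2 k3]] := Hq a ltac:(lia).
    have [al|ag] : a < u0 \/ u0 < a by lia.
    * have := @outer2 a ltac:(lia) al; lia.
    * by apply: (Hn u0 w a b); lia.
  have [ce|cN1] := eqVneq c N.+1.
  + by subst c; rewrite qfm_N1 in qc; lia.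
  have cN : c <= N by lia.
  rewrite qfm_o in qc; try lia.
  have [k1 [k2 k3]] := Hq c ltac:(lia).
  have [ae|au] := eqVneq a u0; first by rewrite ae qfm_u0 in qa; lia.
  have [ae|aw] := eqVneq a w; first by rewrite ae qfm_w in qa; lia.
  rewrite qfm_o in qa; try lia.
  by apply: (Hn a b c d); lia.
Qed.

End Merge.

Lemma iota_split3 a n : 0 < a <= n -> iota 1 n = iota 1 a.-1 ++ a :: iota a.+1 (n - a).
Proof.
move=> ha; rewrite {1}(_ : n = a.-1 + (n - a).+1); last lia.
rewrite iotaD /=; have -> : 1 + a.-1 = a by lia. done.
Qed.

Lemma count_nth_filter (P : pred nat) n j : j < size (filter P (iota 1 n)) ->
  count P (iota 1 (nth 0 (filter P (iota 1 n)) j).-1) = j.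
Proof.
move=> jl; set u := nth 0 _ j.
have : u \in filter P (iota 1 n) by apply: mem_nth.
rewrite mem_filter mem_iota => /andP[Pu hu].
have EL : filter P (iota 1 n) = filter P (iota 1 u.-1) ++ u :: filter P (iota u.+1 (n - u)).
  by rewrite {1}(iota_split3 (a:=u)) ?filter_cat /= ?Pu //; lia.
have Un : uniq (filter P (iota 1 n)) by apply: filter_uniq; apply: iota_uniq.
have E2 : nth 0 (filter P (iota 1 n)) (size (filter P (iota 1 u.-1))) = u.
  by rewrite EL nth_cat ltnn subnn.
have hs : size (filter P (iota 1 u.-1)) < size (filter P (iota 1 n)).
  by rewrite EL size_cat /=; lia.
have := nth_uniq 0 jl hs Un; rewrite E2 eqxx => /esym/eqP ->.
by rewrite size_filter.
Qed.

Section Merge2.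
Variable p : seq nat.
Local Notation N := (size p).
Local Notation sp := (lp_plus p).
Hypothesis N0 : 0 < N.
Variable m : nat.
Hypothesis Hp : is_lp m p.
Variable u0 : nat.
Hypothesis hu0 : 0 < u0 <= N.
Hypothesis ou0 : outerQ (qf p) N u0.
Local Notation w := (qf p u0).
Local Notation sm := (lp_merge sp u0).

Lemma eop_merge : e_op (size sm).-1 sm = sp.
Proof.
have [h1 [h2 h3]] := w_facts N0 Hp hu0 ou0.
rewrite /e_op size_merge /= (modn_small (ltnSn _)) modnn.
have E1 : partner sm N.+1 = w.
  rewrite merge_nth //.
  have -> : (N.+1 == u0) = false by lia.
  have -> : (N.+1 == w) = false by lia.
  by rewrite eqxx.
have E0 : partner sm 0 = u0.
  by rewrite merge_nth // eqxx; have -> : (0 == u0) = false by lia.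
rewrite E1 E0; have -> : (w == 0) = false by lia.
apply: (@eq_from_nth _ 0); first by rewrite size_mkseq size_plus.
move=> x; rewrite size_mkseq => xl; rewrite nth_mkseq //.
have [->|x1] := eqVneq x N.+1; first by rewrite ?eqxx plus_N1.
have [->|x0] := eqVneq x 0; first by rewrite plus_0.
have [->|xw] := eqVneq x w; first by rewrite plus_in // h3.
have [->|xu] := eqVneq x u0; first by rewrite plus_in.
by rewrite merge_nth // (negPf xu) (negPf x0) (negPf xw) (negPf x1).
Qed.

Lemma merge_inP : in_P p sm.
Proof.
split; last exact: eop_merge.
have [Hs _] := Hp; rewrite Hs mul2n doubleK; exact: merge_lp.
Qed.

Lemma pinv_m : pinv N.+2 (qf sm).
Proof. have [_ [H _]] := lp_pos (merge_lp N0 Hp hu0 ou0); by rewrite size_merge in H. Qed.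

Lemma outer_m_lt u : 0 < u < u0 -> outerQ (qf sm) N.+2 u = outerQ (qf p) N u.
Proof.
have [h1 [h2 h3]] := w_facts N0 Hp hu0 ou0.
move=> hu; rewrite /outerQ qfm_o //; try lia.
congr (_ && ~~ _); apply/hasP/hasP => -[v hv /andP[h4 h5]]; exists v.
- by move: hv; rewrite !mem_iota; lia.
- have hv' : 0 < v by move: hv; rewrite mem_iota; lia.
  have E : qf sm v = qf p v by apply: (qfm_o N0 hu0 ou0); lia.
  by rewrite h4 -E.
- by move: hv; rewrite !mem_iota; lia.
- have hv' : 0 < v <= N by move: hv; rewrite mem_iota; lia.
  have E : qf sm v = qf p v by apply: (qfm_o N0 hu0 ou0); lia.
  by rewrite h4 E.
Qed.

Lemma outer_m_u0 : outerQ (qf sm) N.+2 u0 = true.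
Proof.
have Hq := pinv_m.
rewrite /outerQ qfm_u0 //; apply/andP; split; first lia.
apply/hasPn => v; rewrite mem_iota => hv; have [] := Hq v; lia.
Qed.

Lemma outer_m_gt u : u0 < u <= N.+2 -> outerQ (qf sm) N.+2 u = false.
Proof.
have Hq := pinv_m.
move=> hu; have [k1 [k2 k3]] := Hq u ltac:(lia).
have : qf sm u != N.+2.
  apply/eqP => E; move: k3; rewrite E qfm_N2 //; lia.
move=> k4.
have H : has (fun v => (v < u) && (qf sm u < qf sm v)) (iota 1 N.+2).
  apply/hasP; exists u0; first by rewrite mem_iota; lia.
  by rewrite qfm_u0 //; apply/andP; split; lia.
by rewrite /outerQ H andbF.
Qed.

Lemma ex_merge : ex sm = (count (outerQ (qf p) N) (iota 1 u0.-1)).+1.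
Proof.
rewrite ex_pos size_merge // (iota_split3 (a:=u0)); last lia.
rewrite count_cat /= outer_m_u0.
rewrite (eq_in_count (a2 := outerQ (qf p) N)); last first.
  by move=> u; rewrite mem_iota => hu; apply: outer_m_lt; lia.
rewrite (eq_in_count (a1 := outerQ (qf sm) N.+2) (s := iota u0.+1 _) (a2 := pred0)); last first.
  move=> u; rewrite mem_iota => hu; have hu' : u0 < u <= N.+2 by lia.
  by rewrite outer_m_gt.
by rewrite count_pred0 addn0 addn1.
Qed.

End Merge2.

Section Part1.
Variable p : seq nat.
Local Notation N := (size p).
Local Notation sp := (lp_plus p).
Variable m : nat.
Hypothesis m0 : 0 < m.
Hypothesis Hp : is_lp m p.
Local Notation L := (filter (outerQ (qf p) N) (iota 1 N)).

Lemma HN : N = 2 * m.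
Proof. by case: Hp. Qed.
Lemma N0 : 0 < N.
Proof. rewrite HN; lia. Qed.
Lemma halfN : N./2 = m.
Proof. by rewrite HN mul2n doubleK. Qed.

Lemma eop_plus : e_op (size sp).-1 sp = sp.
Proof.
by rewrite /e_op size_plus /= (modn_small (ltnSn _)) modnn plus_N1 eqxx.
Qed.

Lemma plus_inP : in_P p sp.
Proof. split; last exact: eop_plus. rewrite halfN; exact (plus_lp N0 Hp). Qed.

Lemma char_P s : in_P p s -> s = sp \/ exists2 u0, u0 \in L & s = lp_merge sp u0.
Proof.
move=> [Hl He]; rewrite halfN in Hl.
have [Hsz [Hi0 Hnc0]] := Hl.
have Ez : size s = N.+2 by rewrite Hsz HN; lia.
have Hi : forall i, i < N.+2 -> partner s i < N.+2 /\ partner s i <> i /\ partner s (partner s i) = i.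
  by move=> i il; have := Hi0 i; rewrite -Hsz Ez; apply.
have Hnc : forall a b c d, a < c -> c < b -> b < d -> d < N.+2 ->
    partner s a = b -> partner s c = d -> False.
  by move=> a b c d ? ? ? ?; apply: Hnc0 => //; rewrite -Hsz Ez.
move: He; rewrite /e_op Ez /= (modn_small (ltnSn _)) modnn.
case: ifP => [/eqP E0 -> | /eqP Ene He]; first by left.
set a := partner s N.+1 in Ene He.
set b := partner s 0 in He.
have [a1 [a2 a3]] := Hi N.+1 ltac:(lia). rewrite -/a in a1 a2 a3.
have [b1 [b2 b3]] := Hi 0 ltac:(lia). rewrite -/b in b1 b2 b3.
have bN1 : b != N.+1 by apply/eqP => E; apply: Ene; rewrite /a -E b3.
have ab : a != b by apply/eqP => E; move: a3; rewrite E b3.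
have ba : b < a.
  have [//|ab'] : b < a \/ a < b by lia.
  by exfalso; apply: (Hnc 0 b a N.+1) => //; lia.
have Hx : forall x, x < N.+2 -> (if x == N.+1 then 0 else if x == 0 then N.+1 else if x == a then b
    else if x == b then a else partner s x) = partner sp x.
  by move=> x xl; rewrite -He nth_mkseq.
have Eb : qf p b = a.
  rewrite -plus_in; last lia.
  rewrite -Hx; last lia.
  have -> : (b == N.+1) = false by lia.
  have -> : (b == 0) = false by lia.
  have -> : (b == a) = false by lia.
  by rewrite eqxx.
have Hq := Hqp Hp.
have Ho : forall x, x < N.+2 -> x != N.+1 -> x != 0 -> x != a -> x != b -> partner s x = partner sp x.
  by move=> x xl h1 h2 h3 h4; rewrite -Hx // (negPf h1) (negPf h2) (negPf h3) (negPf h4).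
right; exists b.
  rewrite mem_filter mem_iota; apply/andP; split; last lia.
  rewrite /outerQ Eb; apply/andP; split=> //.
  apply/hasPn => v; rewrite mem_iota => hv; apply/negP => /andP[h1 h2].
  have [k1 _] := Hq v ltac:(lia).
  have Ev : partner s v = qf p v.
    rewrite -plus_in; last lia. apply: Ho; lia.
  by apply: (Hnc 0 b v (qf p v)) => //; lia.
apply: (@eq_from_nth _ 0); first by rewrite size_merge Ez.
move=> x; rewrite Ez => xl; rewrite merge_nth //; last lia.
rewrite Eb.
have [->|x1] := eqVneq x b; first done.
have [->|x0] := eqVneq x 0; first done.
have [->|x2] := eqVneq x a; first done.
have [->|x3] := eqVneq x N.+1; first done.
by apply: Ho.
Qed.

End Part1.

Definition merge_i (p : seq nat) (i : nat) :=
  lp_merge (lp_plus p) (nth 0 (outer_lefts (lp_plus p)) i.-1).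

Section Part1b.
Variable p : seq nat.
Local Notation N := (size p).
Local Notation sp := (lp_plus p).
Variable m : nat.
Hypothesis m0 : 0 < m.
Hypothesis Hp : is_lp m p.
Local Notation L := (filter (outerQ (qf p) N) (iota 1 N)).

Lemma exL : ex p = size L.
Proof. by rewrite ex_pos ?size_filter // (N0 m0 Hp). Qed.

Lemma nth_merge i : 1 <= i <= ex p -> nth 0 (outer_lefts sp) i.-1 = nth 0 L i.-1.
Proof.
rewrite exL => hi; rewrite (outer_lefts_plus (N0 m0 Hp) Hp) nth_cat.
by have -> : i.-1 < size L by lia.
Qed.

Lemma merge_i_spec i : 1 <= i <= ex p -> in_P p (merge_i p i) /\ ex (merge_i p i) = i.
Proof.
move=> hi; rewrite /merge_i nth_merge //.
have hi' : i.-1 < size L by rewrite -exL; lia.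
have : nth 0 L i.-1 \in L by apply: mem_nth.
rewrite mem_filter mem_iota => /andP[ou hu].
have hu' : 0 < nth 0 L i.-1 <= N by lia.
split; first exact: (merge_inP (N0 m0 Hp) Hp hu' ou).
rewrite (ex_merge (N0 m0 Hp) Hp hu' ou) count_nth_filter //; lia.
Qed.

Lemma child_spec s : in_P p s ->
  (s = sp /\ ex s = (ex p).+1) \/ (exists i, [/\ 1 <= i <= ex p, s = merge_i p i & ex s = i]).
Proof.
move=> /(char_P m0 Hp) [->|[u0 uL ->]].
  by left; split=> //; exact: (ex_plus (N0 m0 Hp) Hp).
right; exists (index u0 L).+1.
have il : index u0 L < size L by rewrite index_mem.
have E : merge_i p (index u0 L).+1 = lp_merge sp u0.
  by rewrite /merge_i nth_merge /= ?nth_index // exL; lia.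
have hi : 1 <= (index u0 L).+1 <= ex p by rewrite exL; lia.
by split=> //; rewrite -E; case: (merge_i_spec hi).
Qed.

End Part1b.

Lemma part1 (n k : nat) (p : seq nat) : 2 <= n -> is_lp n.-1 p -> ex p = k ->
  (exists ss : seq (seq nat),
      uniq ss /\ (forall sigma, in_P p sigma <-> sigma \in ss) /\
      perm_eq (map ex ss) (iota 1 k.+1)) /\
  (in_P p (lp_plus p) /\ ex (lp_plus p) = k.+1) /\
  (forall i, 1 <= i <= k ->
     let s := lp_merge (lp_plus p) (nth 0 (outer_lefts (lp_plus p)) i.-1) in
     in_P p s /\ ex s = i).
Proof.
move=> n2 Hp Ek.
have m0 : 0 < n.-1 by lia.
have HP : in_P p (lp_plus p) /\ ex (lp_plus p) = k.+1.
  by split; [exact: (plus_inP m0 Hp) | rewrite (ex_plus (N0 m0 Hp) Hp) Ek].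
have HM : forall i, 1 <= i <= k -> in_P p (merge_i p i) /\ ex (merge_i p i) = i.
  by move=> i hi; apply: (merge_i_spec m0 Hp); lia.
split; last by split=> // i hi; exact: HM.
set ss := lp_plus p :: map (merge_i p) (iota 1 k).
have Hmap : map ex ss = k.+1 :: iota 1 k.
  rewrite /ss /= HP.2; congr (_ :: _); rewrite -map_comp -[RHS]map_id; apply/eq_in_map => i.
  by rewrite mem_iota => hi /=; have [_ ->] := HM i ltac:(lia).
have Hperm : perm_eq (map ex ss) (iota 1 k.+1).
  by rewrite Hmap iota_last perm_sym cats1 perm_rcons.
exists ss; split; [|split=> //].
  by apply: (@map_uniq _ _ ex); rewrite (perm_uniq Hperm) iota_uniq.
move=> s; split.
- move=> /(child_spec m0 Hp) [[-> _]|[i [hi -> _]]]; first by rewrite mem_head.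
  by rewrite in_cons; apply/orP; right; apply: map_f; rewrite mem_iota; lia.
- rewrite in_cons => /orP[/eqP ->|/mapP[i]]; first exact: HP.1.
  by rewrite mem_iota => hi ->; have [] := HM i ltac:(lia).
Qed.

Definition unplus (s : seq nat) : seq nat :=
  mkseq (fun y => unposM (size s).-2 (partner s (posM (size s).-2 y))) (size s).-2.
Definition parent (w : seq nat) := unplus (e_op (size w).-1 w).

Lemma unplus_plus m p : 0 < m -> is_lp m p -> unplus (lp_plus p) = p.
Proof.
move=> m0 Hp; have [Hs [Hi _]] := Hp.
apply: (@eq_from_nth _ 0); first by rewrite size_mkseq size_plus.
move=> y; rewrite size_mkseq size_plus /= => yl.
rewrite nth_mkseq; last by rewrite size_plus /=. rewrite size_plus.
have E : partner (lp_plus p) (posM (size p) y) = qf p (posM (size p) y) := plus_in (pos_rng yl).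
change (unposM (size p) (partner (lp_plus p) (posM (size p) y)) = partner p y).
rewrite E qf_pos // posK //; have [] := Hi y; lia.
Qed.

Lemma unplus_spec m s : 0 < m -> is_lp m.+1 s -> partner s 0 = (2 * m).+1 ->
  is_lp m (unplus s) /\ s = lp_plus (unplus s).
Proof.
move=> m0 [Hsz [Hi0 Hnc0]] E0; set N := 2 * m.
have Ez : size s = N.+2 by rewrite Hsz /N; lia.
have Hi : forall i, i < N.+2 -> partner s i < N.+2 /\ partner s i <> i /\ partner s (partner s i) = i.
  by move=> i il; have := Hi0 i; rewrite -Hsz Ez; apply.
have EN1 : partner s N.+1 = 0 by have [_ [_ H]] := Hi 0 ltac:(lia); rewrite E0 in H.
have Hr : forall u, 0 < u <= N -> 0 < partner s u <= N.
  move=> u hu; have [k1 [k2 k3]] := Hi u ltac:(lia).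
  have h1 : partner s u <> 0 by move=> E; move: k3; rewrite E E0; lia.
  have h2 : partner s u <> N.+1 by move=> E; move: k3; rewrite E EN1; lia.
  lia.
set v := unplus s.
have Sv : size v = N by rewrite size_mkseq Ez.
have Ev : forall y, y < N -> partner v y = unposM N (partner s (posM N y)).
  by move=> y yl; rewrite nth_mkseq Ez.
have Qv : forall u, 0 < u <= N -> qf v u = partner s u.
  move=> u hu; rewrite /qf Sv Ev; last by apply: unpos_lt.
  by rewrite unposK // unposK //; apply: Hr.
have Lv : is_lp m v.
  apply: pos_lp; first by rewrite Sv.
  rewrite /posform Sv; split; [|split].
  - move=> y yl; rewrite Ev //; apply: unpos_lt; apply: Hr; exact: pos_rng.
  - move=> u hu; rewrite !Qv //; last exact: Hr.
    have [_ [k2 k3]] := Hi u ltac:(lia); split=> //; exact: Hr.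
  - move=> a b c d a0 ac cb bd dN; rewrite !Qv; try lia.
    by move=> Ea Ec; apply: (Hnc0 a b c d) => //; rewrite /N in dN; lia.
split=> //.
apply: (@eq_from_nth _ 0); first by rewrite size_plus Sv Ez.
move=> x; rewrite Ez => xl.
have [->|x0] := eqVneq x 0; first by rewrite plus_0 Sv E0.
have [->|x1] := eqVneq x N.+1; first by rewrite -Sv plus_N1 Sv EN1.
have hx : 0 < x <= N by lia.
by rewrite plus_in ?Sv // Qv.
Qed.

Lemma eop_lp m w : 0 < m -> is_lp m.+1 w ->
  is_lp m.+1 (e_op (size w).-1 w) /\ partner (e_op (size w).-1 w) 0 = (2 * m).+1.
Proof.
move=> m0 [Hsz [Hi0 Hnc0]]; set N := 2 * m.
have Ez : size w = N.+2 by rewrite Hsz /N; lia.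
have Hi : forall i, i < N.+2 -> partner w i < N.+2 /\ partner w i <> i /\ partner w (partner w i) = i.
  by move=> i il; have := Hi0 i; rewrite -Hsz Ez; apply.
have Hnc : forall a b c d, a < c -> c < b -> b < d -> d < N.+2 ->
    partner w a = b -> partner w c = d -> False.
  by move=> a b c d ? ? ? ?; apply: Hnc0 => //; rewrite -Hsz Ez.
rewrite /e_op Ez /= (modn_small (ltnSn _)) modnn.
case: ifP => [/eqP E1 | /eqP Ene].
  split; first by split=> //.
  by have [_ [_ H]] := Hi N.+1 ltac:(lia); rewrite E1 in H.
set a := partner w N.+1 in Ene *.
set b := partner w 0.
have [a1 [a2 a3]] := Hi N.+1 ltac:(lia). rewrite -/a in a1 a2 a3.
have [b1 [b2 b3]] := Hi 0 ltac:(lia). rewrite -/b in b1 b2 b3.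
have bN1 : b <> N.+1 by move=> E; apply: Ene; rewrite /a -E b3.
have ab : a <> b by move=> E; move: a3; rewrite E b3.
have ba : b < a.
  have [//|ab'] : b < a \/ a < b by lia.
  by exfalso; apply: (Hnc 0 b a N.+1) => //; lia.
set s := mkseq _ _.
have Es : forall x, x < N.+2 -> partner s x = if x == N.+1 then 0 else if x == 0 then N.+1
    else if x == a then b else if x == b then a else partner w x.
  by move=> x xl; rewrite nth_mkseq.
have Sp : forall x, x < N.+2 -> (x = N.+1 /\ partner s x = 0) \/ (x = 0 /\ partner s x = N.+1) \/
    (x = a /\ partner s x = b) \/ (x = b /\ partner s x = a) \/
    ([/\ x <> N.+1, x <> 0, x <> a & x <> b] /\ partner s x = partner w x).
  move=> x xl; rewrite Es //.
  case: eqVneq => [->|h1]; first by left.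
  case: eqVneq => [->|h2]; first by right; left.
  case: eqVneq => [->|h3]; first by do 2 right; left.
  case: eqVneq => [->|h4]; first by do 3 right; left.
  by do 4 right; split=> //; split; apply/eqP.
have Wo : forall x, x < N.+2 -> [/\ x <> N.+1, x <> 0, x <> a & x <> b] ->
    [/\ partner w x <> N.+1, partner w x <> 0, partner w x <> a & partner w x <> b].
  move=> x xl [h1 h2 h3 h4]; have [k1 [k2 k3]] := Hi x xl.
  split=> E; rewrite E in k3.
  - by apply: h3; rewrite -k3.
  - by apply: h4; rewrite -k3.
  - by apply: h1; rewrite -k3 a3.
  - by apply: h2; rewrite -k3 b3.
have Ss : size s = 2 * m.+1 by rewrite size_mkseq /N; lia.
split; last by rewrite Es //; have -> : (0 == N.+1) = false by lia.
split=> //; rewrite -Ss size_mkseq; split.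
- move=> i il; have Sx := Sp i il.
  case: Sx => [[-> E]|[[-> E]|[[-> E]|[[-> E]|[ho E]]]]]; rewrite E.
  + split; first lia; split; first lia.
    by case: (Sp 0 ltac:(lia)) => [[]|[[_ ->]|[[]|[[]|[[]]]]]] //; lia.
  + split; first lia; split; first lia.
    by case: (Sp N.+1 ltac:(lia)) => [[_ ->]|[[]|[[]|[[]|[[]]]]]] //; lia.
  + split; first lia; split; first lia.
    by case: (Sp b ltac:(lia)) => [[]|[[]|[[]|[[_ ->]|[[]]]]]] //; lia.
  + split; first lia; split; first lia.
    by case: (Sp a ltac:(lia)) => [[]|[[]|[[_ ->]|[[]|[[]]]]]] //; lia.
  + have [k1 [k2 k3]] := Hi i il.
    have [o1 o2 o3 o4] := Wo i il ho.
    split=> //; split=> //.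
    case: (Sp (partner w i) k1) => [[]|[[]|[[]|[[]|[_ ->]]]]] //.
- move=> x y z t h1 h2 h3 h4 Ex Ez'.
  case: (Sp x ltac:(lia)) => [[? Hx]|[[? Hx]|[[? Hx]|[[? Hx]|[[c1 c2 c3 c4] Hx]]]]];
  case: (Sp z ltac:(lia)) => [[? Hz]|[[? Hz]|[[? Hz]|[[? Hz]|[[d1 d2 d3 d4] Hz]]]]]; subst; try lia.
  + have [o1 _ _ _] := Wo z ltac:(lia) (And4 d1 d2 d3 d4).
    by apply: (Hnc z (partner w z) a N.+1); lia.
  + by apply: (Hnc 0 b x (partner w x)) => //; lia.
  + by apply: (Hnc x (partner w x) z (partner w z)); lia.
Qed.

Lemma lp_size m v : is_lp m v -> size v = 2 * m.
Proof. by case. Qed.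

Lemma Par m w : 0 < m -> is_lp m.+1 w -> is_lp m (parent w) /\ in_P (parent w) w.
Proof.
move=> m0 Hw; have [He E0] := eop_lp m0 Hw; have [Hv Es] := unplus_spec m0 He E0.
split=> //; split; last exact: Es.
by rewrite (lp_size Hv) mul2n doubleK.
Qed.

Lemma ParU m v w : 0 < m -> is_lp m v -> in_P v w -> parent w = v.
Proof. by move=> m0 Hv [_ He]; rewrite /parent He (unplus_plus m0 Hv). Qed.

Lemma inP_lp m v w : is_lp m v -> in_P v w -> is_lp m.+1 w.
Proof. by move=> Hv [H _]; rewrite (lp_size Hv) mul2n doubleK in H. Qed.

Definition child (v : seq nat) (i : nat) :=
  if i == (ex v).+1 then lp_plus v else merge_i v i.

Lemma child_ok m v i : 0 < m -> is_lp m v -> 1 <= i <= (ex v).+1 ->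
  in_P v (child v i) /\ ex (child v i) = i.
Proof.
move=> m0 Hv hi; rewrite /child; case: eqP => [->|ne].
  by split; [exact: (plus_inP m0 Hv) | exact: (ex_plus (N0 m0 Hv) Hv)].
by apply: (merge_i_spec m0 Hv); lia.
Qed.

Lemma child_eq m v w : 0 < m -> is_lp m v -> in_P v w ->
  child v (ex w) = w /\ 1 <= ex w <= (ex v).+1.
Proof.
move=> m0 Hv Hw; case: (child_spec m0 Hv Hw) => [[-> ->]|[i [hi -> ->]]].
  by rewrite /child eqxx; split=> //; lia.
rewrite /child; have -> : (i == (ex v).+1) = false by lia.
by split=> //; lia.
Qed.

Lemma LP1 v : is_lp 1 v -> v = lp_root.
Proof.
case=> Hs [Hi _]; case: v Hs Hi => [|x [|y []]] //= _ Hi.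
have [h1 [h2 _]] := Hi 0 erefl; have [k1 [k2 _]] := Hi 1 erefl; simpl in *.
by rewrite /lp_root; congr [:: _; _]; lia.
Qed.

Lemma root_lp : is_lp 1 lp_root.
Proof.
split=> //; split.
  by move=> [|[|i]] //=.
move=> a b c d; lia.
Qed.

Fixpoint Fp (m : nat) (v : seq nat) : seq nat :=
  if m is m'.+1 then rcons (Fp m' (parent v)) (ex v).+1 else [::].
Definition fT (v : seq nat) := Fp (size v)./2 v.
Definition gT (t : seq nat) := foldl (fun v j => child v j.-1) lp_root (behead t).

Lemma fT_Fp m v : is_lp m v -> fT v = Fp m v.
Proof. by move=> Hv; rewrite /fT (lp_size Hv) mul2n doubleK. Qed.

Lemma Fp_root : Fp 1 lp_root = [:: 2].
Proof. by []. Qed.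

Lemma gT_rcons r j : gT (2 :: rcons r j) = child (gT (2 :: r)) j.-1.
Proof. by rewrite /gT /= foldl_rcons. Qed.

Lemma treeA m : 0 < m -> forall v, is_lp m v ->
  [/\ cat_vertex (Fp m v), gT (Fp m v) = v, last 2 (Fp m v) = (ex v).+1 & size (Fp m v) = m].
Proof.
elim: m => [//|m IH] _ v Hv.
case: m IH Hv => [_ Hv | m IH Hv].
  rewrite (LP1 Hv) Fp_root; split=> //; by exists [::].
have [Hpv Hin] := Par (m:=m.+1) erefl Hv.
have [[r [Er Pr]] g l sz] := IH erefl _ Hpv.
have [Ec hi] := child_eq (m:=m.+1) erefl Hpv Hin.
have -> : Fp m.+2 v = rcons (Fp m.+1 (parent v)) (ex v).+1 by [].
rewrite Er; split.
- exists (rcons r (ex v).+1); split=> //.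
  rewrite rcons_path Pr /=; move: l; rewrite Er /= => ->; apply/andP; split; lia.
- by rewrite gT_rcons -Er g.
- by rewrite last_rcons.
- by rewrite size_rcons -Er sz.
Qed.

Lemma treeB r : cat_vertex (2 :: r) ->
  is_lp (size r).+1 (gT (2 :: r)) /\ Fp (size r).+1 (gT (2 :: r)) = 2 :: r.
Proof.
elim/last_ind: r => [|r j IH].
  by move=> _; split; [exact: root_lp | exact: Fp_root].
case=> r0 [[E0] P]; subst r0.
move: P; rewrite rcons_path => /andP[P Rj].
have [Hv Ef] := IH (ex_intro _ r (conj erefl P)).
set v := gT (2 :: r) in Hv Ef *.
have [_ _ l _] := treeA (ltn0Sn _) Hv.
move: l; rewrite Ef /= => l; rewrite l in Rj.
have hj : 1 <= j.-1 <= (ex v).+1 by lia.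
have [Hin Ex] := child_ok (ltn0Sn _) Hv hj.
rewrite gT_rcons -/v size_rcons; split; first exact: (inP_lp Hv Hin).
rewrite (ParU (ltn0Sn _) Hv Hin) Ef Ex; congr rcons; lia.
Qed.

Lemma part2 : exists f g : seq nat -> seq nat,
      (forall v, lp_vertex v -> cat_vertex (f v) /\ g (f v) = v) /\
      (forall t, cat_vertex t -> lp_vertex (g t) /\ f (g t) = t) /\
      f lp_root = cat_root /\
      (forall v, lp_vertex v -> cat_label (f v) = lp_label v) /\
      (forall v w, lp_vertex v -> lp_vertex w ->
         (in_P v w <-> cat_child (f v) (f w))).
Proof.
exists fT, gT; split; [|split; [|split; [|split]]].
- move=> v [m [m1 Hv]]; rewrite (fT_Fp Hv); by have [] := treeA m1 Hv.
- move=> t [r [-> P]]; have [Hv Ef] := treeB (ex_intro _ r (conj erefl P)).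
  split; first by exists (size r).+1.
  by rewrite (fT_Fp Hv).
- by [].
- move=> v [m [m1 Hv]]; rewrite (fT_Fp Hv); by have [] := treeA m1 Hv.
- move=> v w [m [m1 Hv]] [m' [m1' Hw']]; rewrite (fT_Fp Hv) (fT_Fp Hw').
  have [_ gv lv sv] := treeA m1 Hv.
  split.
  + move=> Hin; have Hw := inP_lp Hv Hin.
    have Em : m' = m.+1 by have := lp_size Hw; rewrite (lp_size Hw'); lia.
    subst m'.
    have [Ec hi] := child_eq m1 Hv Hin.
    exists (ex w).+1; split; first by rewrite lv; lia.
    by have -> : Fp m.+1 w = rcons (Fp m (parent w)) (ex w).+1 by []; rewrite (ParU m1 Hv Hin).
  + move=> [j [hj E]].
    have [_ _ _ sw] := treeA m1' Hw'.
    have Em : m' = m.+1 by move: sw; rewrite E size_rcons sv.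
    subst m'.
    have [Hpw Hin] := Par m1 Hw'.
    move: E; have -> : Fp m.+1 w = rcons (Fp m (parent w)) (ex w).+1 by [].
    case/rcons_inj => E _.
    have [_ gp _ _] := treeA m1 Hpw.
    have Epv : parent w = v by rewrite -gp E gv.
    by rewrite -Epv.
Qed.

Theorem mainTheorem3 :
  (forall (n k : nat) (p : seq nat),
      2 <= n -> is_lp n.-1 p -> ex p = k ->
      (exists ss : seq (seq nat),
          uniq ss /\ (forall sigma, in_P p sigma <-> sigma \in ss) /\
          perm_eq (map ex ss) (iota 1 k.+1)) /\
      (in_P p (lp_plus p) /\ ex (lp_plus p) = k.+1) /\
      (forall i, 1 <= i <= k ->
         let s := lp_merge (lp_plus p) (nth 0 (outer_lefts (lp_plus p)) i.-1) in
         in_P p s /\ ex s = i)) /\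
  (exists f g : seq nat -> seq nat,
      (forall v, lp_vertex v -> cat_vertex (f v) /\ g (f v) = v) /\
      (forall t, cat_vertex t -> lp_vertex (g t) /\ f (g t) = t) /\
      f lp_root = cat_root /\
      (forall v, lp_vertex v -> cat_label (f v) = lp_label v) /\
      (forall v w, lp_vertex v -> lp_vertex w ->
         (in_P v w <-> cat_child (f v) (f w)))).
Proof.
split; first exact: part1.
exact: part2.
Qed.
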